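(* Let $\Lambda\subset\mathbb{P}^3$ be an irreducible quadric cone and $Q\subset\mathbb{P}^3$ a smooth quadric, over an algebraically closed field of characteristic not $2$. Let $\widehat{Q}\subset\widehat{\mathbb{P}}^3$ be the dual quadric, $\widehat{\Lambda}\subset\widehat{\mathbb{P}}^3$ the plane dual to the vertex of $\Lambda$, and $\widehat{\lambda}\subset\widehat{\Lambda}$ the conic parametrizing the tangent planes of $\Lambda$. Then the pencil $\langle\Lambda,Q\rangle$ contains a reducible but reduced quadric if and only if $\widehat{\lambda}$ is bitangent to $\widehat{Q}$, and it contains a non-reduced quadric if and only if $\widehat{\lambda}\subset\widehat{Q}$.
   Context: $\widehat{\lambda}$ is said to be bitangent to $\widehat{Q}$ if $\widehat{\lambda}\not\subset\widehat{Q}$ and $\widehat{\lambda}$ is tangent to $\widehat{Q}$ at every point of $\widehat{\lambda}\cap\widehat{Q}$. *)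

(* Defs.v *)
(* Projective space P^3 over K: nonzero column vectors in
   'cV[K]_4 up to scalars. A quadric is given by a symmetric 4x4 matrix A,
   with equation x^T A x = 0. Planes (points of the dual P^3) are nonzero
   column vectors u, the plane being { x | u^T x = 0 }. *)
From HB Require Import structures.
From mathcomp Require Import all_boot all_order all_algebra.
Set Implicit Arguments. Unset Strict Implicit. Unset Printing Implicit Defensive.
Import Order.TTheory GRing.Theory Num.Theory.
Local Open Scope ring_scope.

Section Quadrics.
Variable K : fieldType.

Definition bil (A : 'M[K]_4) (x y : 'cV[K]_4) : K := (x^T *m A *m y) 0 0.
Definition qf (A : 'M[K]_4) (x : 'cV[K]_4) : K := bil A x x.
Definition lin (l : 'rV[K]_4) (x : 'cV[K]_4) : K := (l *m x) 0 0.

Definition symmetric (A : 'M[K]_4) : Prop := A^T = A.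

Definition reducible (A : 'M[K]_4) : Prop :=
  exists l1 l2 : 'rV[K]_4, forall x, qf A x = lin l1 x * lin l2 x.

Definition nonreduced (A : 'M[K]_4) : Prop :=
  exists (c : K) (l : 'rV[K]_4), forall x, qf A x = c * (lin l x) ^+ 2.

(* singular points (Jacobian criterion, char <> 2): gradient 2 A x = 0 *)
Definition singular_point (A : 'M[K]_4) (x : 'cV[K]_4) : Prop :=
  x != 0 /\ A *m x = 0.

Definition smooth_quadric (A : 'M[K]_4) : Prop :=
  symmetric A /\ A != 0 /\ forall x, ~ singular_point A x.

Definition irreducible_quadric_cone (A : 'M[K]_4) : Prop :=
  symmetric A /\ ~ reducible A /\ exists v, singular_point A v.

Definition pencil_member (L Q M : 'M[K]_4) : Prop :=
  exists a b : K, (a != 0 \/ b != 0) /\ M = a *: L + b *: Q.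

Definition dual_quadric (Q : 'M[K]_4) : 'M[K]_4 := invmx Q.

Definition on_quadric (A : 'M[K]_4) (u : 'cV[K]_4) : Prop :=
  u != 0 /\ qf A u = 0.

(* lambda^ : the tangent planes of the cone L, i.e. the planes L x for x a
   smooth point of L (x on L, L x <> 0). These lie in the plane Lambda^ dual
   to the vertex. *)
Definition on_lambda_hat (L : 'M[K]_4) (u : 'cV[K]_4) : Prop :=
  u != 0 /\ exists x, qf L x = 0 /\ u = L *m x.

(* tangent line of the conic lambda^ at the point u (= L x): the image under
   the (linear) parametrization y |-> L y of the tangent plane
   T_x Lambda = { y | x^T L y = 0 } = { y | u^T y = 0 }. *)
Definition on_tangent_line_lambda_hat (L : 'M[K]_4) (u w : 'cV[K]_4) : Prop :=
  exists y, lin u^T y = 0 /\ w = L *m y.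

Definition on_tangent_plane (D : 'M[K]_4) (u w : 'cV[K]_4) : Prop :=
  bil D u w = 0.

Definition tangent_at (L Q : 'M[K]_4) (u : 'cV[K]_4) : Prop :=
  forall w, on_tangent_line_lambda_hat L u w ->
    on_tangent_plane (dual_quadric Q) u w.

Definition lambda_hat_sub_Q_hat (L Q : 'M[K]_4) : Prop :=
  forall u, on_lambda_hat L u -> on_quadric (dual_quadric Q) u.

Definition bitangent (L Q : 'M[K]_4) : Prop :=
  ~ lambda_hat_sub_Q_hat L Q /\
  forall u, on_lambda_hat L u -> on_quadric (dual_quadric Q) u -> tangent_at L Q u.

End Quadrics.

(* Main.v *)
Require Import Defs.
From HB Require Import structures.
From mathcomp Require Import all_boot all_order all_algebra.
From mathcomp Require Import ring zify.
From Stdlib Require Import Classical.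
Import GRing.Theory.
Local Open Scope ring_scope.

Section B.
Context {K : fieldType}.
Implicit Types (A B : 'M[K]_4) (x y z : 'cV[K]_4) (r : 'rV[K]_4).

Lemma bilDl A x y z : bil A (x + y) z = bil A x z + bil A y z.
Proof. by rewrite /bil linearD /= !mulmxDl mxE. Qed.
Lemma bilDr A x y z : bil A z (x + y) = bil A z x + bil A z y.
Proof. by rewrite /bil !mulmxDr mxE. Qed.
Lemma bilZl A a x z : bil A (a *: x) z = a * bil A x z.
Proof. by rewrite /bil linearZ /= -!scalemxAl mxE. Qed.
Lemma bilZr A a x z : bil A z (a *: x) = a * bil A z x.
Proof. by rewrite /bil -!scalemxAr mxE. Qed.
Lemma bilNl A x z : bil A (- x) z = - bil A x z.
Proof. by rewrite -scaleN1r bilZl mulN1r. Qed.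
Lemma bilNr A x z : bil A z (- x) = - bil A z x.
Proof. by rewrite -scaleN1r bilZr mulN1r. Qed.
Lemma bilBl A x y z : bil A (x - y) z = bil A x z - bil A y z.
Proof. by rewrite bilDl bilNl. Qed.
Lemma bilBr A x y z : bil A z (x - y) = bil A z x - bil A z y.
Proof. by rewrite bilDr bilNr. Qed.
Lemma bil0l A z : bil A 0 z = 0.
Proof. by rewrite /bil linear0 !mul0mx mxE. Qed.
Lemma bil0r A z : bil A z 0 = 0.
Proof. by rewrite /bil mulmx0 mxE. Qed.
Lemma bilAD A B x y : bil (A + B) x y = bil A x y + bil B x y.
Proof. by rewrite /bil mulmxDr mulmxDl mxE. Qed.
Lemma bilAZ A a x y : bil (a *: A) x y = a * bil A x y.
Proof. by rewrite /bil -scalemxAr -scalemxAl mxE. Qed.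
Lemma bilAN A x y : bil (- A) x y = - bil A x y.
Proof. by rewrite -scaleN1r bilAZ mulN1r. Qed.
Lemma bilAB A B x y : bil (A - B) x y = bil A x y - bil B x y.
Proof. by rewrite bilAD bilAN. Qed.
Lemma bilA0 x y : bil 0 x y = 0.
Proof. by rewrite /bil mulmx0 mul0mx mxE. Qed.
Lemma bil_mul A B C x y : bil (B^T *m A *m C) x y = bil A (B *m x) (C *m y).
Proof. by rewrite /bil trmx_mul !mulmxA. Qed.
Lemma bil_ker A x y : A *m y = 0 -> bil A x y = 0.
Proof. by move=> h; rewrite /bil -mulmxA h mulmx0 mxE. Qed.

Lemma bil_sym A x y : Defs.symmetric A -> bil A x y = bil A y x.
Proof.
move=> hA; rewrite /bil.
have -> : (y^T *m A *m x) 0 0 = ((y^T *m A *m x)^T) 0 0 by rewrite [RHS]mxE.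
by rewrite !trmx_mul trmxK hA mulmxA.
Qed.
Lemma bil_entry A i j : bil A (delta_mx i 0) (delta_mx j 0) = A i j.
Proof. rewrite /bil trmx_delta -rowE -colE. by rewrite !mxE. Qed.

Lemma linDr r x y : lin r (x + y) = lin r x + lin r y.
Proof. by rewrite /lin mulmxDr mxE. Qed.
Lemma linZr r a x : lin r (a *: x) = a * lin r x.
Proof. by rewrite /lin -scalemxAr mxE. Qed.
Lemma linDl r1 r2 x : lin (r1 + r2) x = lin r1 x + lin r2 x.
Proof. by rewrite /lin mulmxDl mxE. Qed.
Lemma linZl r a x : lin (a *: r) x = a * lin r x.
Proof. by rewrite /lin -scalemxAl mxE. Qed.
Lemma lin_bil A x y : lin (x^T *m A) y = bil A x y.
Proof. by []. Qed.
Lemma lin_delta r j : lin r (delta_mx j 0) = r 0 j.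
Proof. by rewrite /lin -colE !mxE. Qed.
Lemma lin_tr A x y : Defs.symmetric A -> lin (A *m x)^T y = bil A x y.
Proof. by move=> hA; rewrite /lin trmx_mul hA. Qed.

Lemma qf_sym_eq0 A : Defs.symmetric A -> (2%:R : K) != 0 -> (forall x, qf A x = 0) -> A = 0.
Proof.
move=> hA h2 h; apply/matrixP=> i j; rewrite mxE -bil_entry.
set di := delta_mx i 0; set dj := delta_mx j 0.
have e := h (di + dj); rewrite /qf bilDl !bilDr in e.
have e1 := h di; have e2 := h dj; rewrite /qf in e1 e2.
rewrite e1 e2 (bil_sym A dj di hA) add0r addr0 in e.
have : 2%:R * bil A di dj = 0 by rewrite mulr2n mulrDl mul1r.
by move/eqP; rewrite mulf_eq0 (negPf h2) /= => /eqP.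
Qed.

Lemma bil_outer (a b : 'rV[K]_4) x y : bil (a^T *m b) x y = lin a x * lin b y.
Proof.
rewrite /bil /lin mulmxA -mulmxA -trmx_mul.
by rewrite mxE big_ord1 mxE.
Qed.

Lemma sym_entry A i j : Defs.symmetric A -> A i j = A j i.
Proof. by move=> hA; rewrite -{1}hA mxE. Qed.

Lemma rV_nz (w : 'rV[K]_4) : w != 0 -> exists k, w 0 k != 0.
Proof.
move=> nz; case: (pickP (fun k => w 0 k != 0)) => [k hk|H]; first by exists k.
case/eqP: nz; apply/matrixP=> i j; rewrite ord1 mxE.
by have := H j => /= /negbFE/eqP.
Qed.

Lemma rank1_sym A : Defs.symmetric A -> (\rank A <= 1)%N ->
  exists (k : K) (w : 'rV[K]_4), A = k *: (w^T *m w).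
Proof.
move=> hA rA; case: (eqVneq A 0) => [->|nzA]; first by exists 0, 0; rewrite scale0r.
have [w wA nzw] := rowV0Pn nzA.
have rw : \rank w = 1%N by rewrite rank_rV nzw.
have eqwA : (w == A)%MS.
  by rewrite -(mxrank_leqif_eq wA).2 rw eqn_leq rA andbT lt0n mxrank_eq0.
have Aw : (A <= w)%MS by case/andP: eqwA.
have hal : forall i, exists a, row i A = a *: w.
  by move=> i; apply/sub_rVP; apply: submx_trans (row_sub i A) Aw.
have ent : forall i j a, row i A = a *: w -> A i j = a * w 0 j.
  by move=> i j a h; have := congr1 (fun M : 'M[K]_(1,4) => M 0 j) h; rewrite !mxE.
have [k wk] := rV_nz _ nzw.
have [ak hk] := hal k.
exists (ak / w 0 k), w; apply/matrixP=> i j.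
have [ai hi] := hal i.
have e1 := ent i j ai hi.
have e2 := ent i k ai hi.
have e3 := ent k i ak hk.
rewrite (sym_entry _ i k hA) e3 in e2.
rewrite e1 mxE mxE big_ord1 !mxE.
have -> : ai = ak * w 0 i / w 0 k by rewrite e2; field.
by field.
Qed.

Lemma trmx_scale_outer (a b : 'rV[K]_4) : (a^T *m b)^T = b^T *m a.
Proof. by rewrite trmx_mul trmxK. Qed.

Lemma reducible_rank A : Defs.symmetric A -> (2%:R : K) != 0 -> reducible A -> (\rank A <= 2)%N.
Proof.
move=> hA h2 [l1 [l2 hl]].
set B := (2%:R)^-1 *: (l1^T *m l2 + l2^T *m l1).
have hB : Defs.symmetric B by rewrite /Defs.symmetric /B linearZ /= linearD /= !trmx_scale_outer addrC.
have eAB : A - B = 0.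
  apply: qf_sym_eq0 => //; first by rewrite /Defs.symmetric linearB /= hA hB.
  move=> x; rewrite /qf bilAB /B bilAZ bilAD !bil_outer -/(qf A x) hl.
  by field.
have -> : A = B by apply/eqP; rewrite -subr_eq0 eAB.
apply: leq_trans (mxrank_scale _ _) _.
apply: leq_trans (mxrank_add _ _) _.
have r1 : forall a b : 'rV[K]_4, (\rank (a^T *m b) <= 1)%N.
  by move=> a b; apply: leq_trans (mxrankM_maxl _ _) (rank_leq_col _).
by rewrite -[2%N]/(1 + 1)%N leq_add.
Qed.

Lemma nonreduced_rank A : Defs.symmetric A -> (2%:R : K) != 0 -> nonreduced A -> (\rank A <= 1)%N.
Proof.
move=> hA h2 [c [l hl]].
set B := c *: (l^T *m l).
have hB : Defs.symmetric B by rewrite /Defs.symmetric /B linearZ /= !trmx_scale_outer.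
have eAB : A - B = 0.
  apply: qf_sym_eq0 => //; first by rewrite /Defs.symmetric linearB /= hA hB.
  move=> x; rewrite /qf bilAB /B bilAZ !bil_outer -/(qf A x) hl.
  by rewrite expr2 subrr.
have -> : A = B by apply/eqP; rewrite -subr_eq0 eAB.
apply: leq_trans (mxrank_scale _ _) _.
by apply: leq_trans (mxrankM_maxl _ _) (rank_leq_col _).
Qed.

Lemma rank1_nonreduced A : Defs.symmetric A -> (\rank A <= 1)%N -> nonreduced A.
Proof.
move=> hA rA; have [k [w ->]] := rank1_sym _ hA rA.
exists k, w => x; by rewrite /qf bilAZ bil_outer expr2.
Qed.
End B.

Section C.
Context {K : closedFieldType}.

Lemma root2 (a0 a1 a2 : K) : a2 != 0 -> exists s, a0 + a1 * s + a2 * s ^+ 2 = 0.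
Proof.
move=> h; have [x hx] := @solve_monicpoly K 2 (fun i => if i is 0 then - a0 / a2 else - a1 / a2) isT.
exists x; move: hx; rewrite !big_ord_recr big_ord0 /= => hx.
rewrite hx expr0 expr1; field; done.
Qed.

Lemma root4 (a0 a1 a2 a3 a4 : K) : a4 != 0 ->
  exists s, a0 + a1 * s + a2 * s ^+ 2 + a3 * s ^+ 3 + a4 * s ^+ 4 = 0.
Proof.
move=> h; have [x hx] := @solve_monicpoly K 4
  (fun i => match i with 0 => - a0 / a4 | 1 => - a1 / a4 | 2 => - a2 / a4 | _ => - a3 / a4 end) isT.
exists x; move: hx; rewrite !big_ord_recr big_ord0 /= => hx.
rewrite hx expr0 expr1; field; done.
Qed.

Lemma sqrt_ex (k : K) : exists r, r ^+ 2 = k.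
Proof.
have [x hx] := @solve_monicpoly K 2 (fun i => if i is 0 then k else 0) isT.
by exists x; move: hx; rewrite !big_ord_recr big_ord0 /= mul0r addr0 expr0 mulr1 add0r.
Qed.

Lemma poly_nonroot (p : {poly K}) : p != 0 -> exists s, p.[s] != 0.
Proof.
move=> nz.
have : size (p * 'X - 1) != 1%N.
  have hs : size (p * 'X) = (size p).+1 by rewrite size_mulX.
  rewrite size_addl; last by rewrite size_polyN size_poly1 hs ltnS lt0n size_poly_eq0.
  by rewrite hs eqSS size_poly_eq0.
case/closed_rootP=> s; rewrite /root !hornerE => /eqP h.
exists s; apply/eqP => e; move: h; rewrite e mul0r sub0r => /eqP; by rewrite oppr_eq0 oner_eq0.
Qed.

Lemma rank2_reducible (N : 'M[K]_4) : Defs.symmetric N -> (\rank N <= 2)%N -> reducible N.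
Proof.
move=> hN rN.
case: (classic (forall x, qf N x = 0)) => [h0|].
  by exists 0, 0 => x; rewrite h0 /lin mul0mx mxE mul0r.
move/not_all_ex_not => [e he].
set c := qf N e.
have hc : c != 0 by apply/eqP.
set Y : 'M_4 := N *m e *m e^T - c *: 1%:M.
have kY : kermx N *m Y = - c *: kermx N.
  by rewrite /Y mulmxBr !mulmxA mulmx_ker !mul0mx sub0r scalemx1 mul_mx_scalar scaleNr.
have subK : (kermx N <= Y)%MS.
  have -> : kermx N = (- c^-1) *: (kermx N *m Y).
    by rewrite kY scalerA mulrN mulNr (mulVf hc) opprK scale1r.
  by rewrite scalemx_sub // submxMl.
have Ye : Y *m (N *m e) = 0.
  have h1 : e^T *m (N *m e) = c%:M by rewrite mulmxA [LHS]mx11_scalar.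
  rewrite /Y mulmxBl -!mulmxA h1 mul_mx_scalar -scalemxAr.
  by rewrite -scalemxAl mul1mx subrr.
have nze : (N *m e)^T != 0.
  apply/eqP => h; apply: he; rewrite /qf bil_ker //.
  by rewrite -[N *m e]trmxK h trmx0.
have rY : (\rank Y <= 3)%N.
  have : ((N *m e)^T <= kermx Y^T)%MS by apply/sub_kermxP; rewrite -trmx_mul Ye trmx0.
  move/mxrankS; rewrite rank_rV nze mxrank_ker mxrank_tr => h.
  lia.
have rD : (\rank (Y *m N) <= 1)%N.
  have h1 := mxrank_mul_ker Y N.
  rewrite (capmx_idPr subK).1 mxrank_ker in h1.
  have := rank_leq_row N. move: rY rN h1. set a := \rank (Y *m N). set b := \rank N. set d := \rank Y. lia.
have eD : Y *m N = (N *m e) *m (N *m e)^T - c *: N.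
  by rewrite /Y mulmxBl trmx_mul hN -!mulmxA -scalemxAl mul1mx.
have hD : Defs.symmetric (Y *m N).
  by rewrite eD /Defs.symmetric linearB linearZ /= trmx_mul trmxK hN.
have [k [w hw]] := rank1_sym _ hD rD.
have [r hr] := sqrt_ex k.
set a := (N *m e)^T.
have ea : N *m e *m (N *m e)^T = a^T *m a by rewrite /a trmxK.
exists (c^-1 *: (a + (- r) *: w)), (a + r *: w) => x.
have qx := congr1 (fun M => qf M x) hw; rewrite /= eD ea /qf bilAB bilAZ !bil_outer bilAZ bil_outer in qx.
have -> : qf N x = (lin a x * lin a x - k * (lin w x * lin w x)) / c.
  by rewrite -qx /qf /c; field.
rewrite linZl !linDl !linZl -hr; field; done.
Qed.

Lemma qf_comb (A : 'M[K]_4) y p (s : K) : Defs.symmetric A ->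
  qf A (y + s *: p) = qf A y + 2%:R * s * bil A y p + s ^+ 2 * qf A p.
Proof.
move=> hA; rewrite /qf bilDl !bilDr !bilZl !bilZr (bil_sym _ p y hA); ring.
Qed.

Lemma ns_lemma (L S : 'M[K]_4) : Defs.symmetric L -> Defs.symmetric S -> (2%:R : K) != 0 ->
  ~ reducible L -> (forall x, qf L x = 0 -> qf S x = 0) -> exists mu, S = mu *: L.
Proof.
move=> hL hS h2 nred hz.
have [p hp] : exists p, qf L p != 0.
  apply: NNPP => H; apply: nred; exists 0, 0 => x.
  rewrite /lin mul0mx mxE mul0r.
  by apply/eqP; apply/negPn/negP => hx; apply: H; exists x.
set qp := qf L p.
set mu := qf S p / qp.
set D := S - mu *: L.
have hD : Defs.symmetric D by rewrite /D /Defs.symmetric linearB linearZ /= hS hL.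
have Dp : qf D p = 0.
  rewrite /D /qf bilAB bilAZ /mu /qp /qf. field. exact: hp.
have qD : forall x, qf D x = qf S x - mu * qf L x by move=> x; rewrite /D /qf bilAB bilAZ.
set disc := fun y => bil L y p ^+ 2 - qf L y * qp.
have claim1 : forall y, disc y != 0 -> qf D y = 0.
  move=> y hd; have [r hr] := sqrt_ex (disc y).
  have rnz : r != 0 by apply: contraNneq hd => e; rewrite -hr e expr0n.
  set b := bil L y p.
  have key : forall s, s ^+ 2 * qp + 2%:R * s * b + qf L y = 0 -> qf D y + 2%:R * s * bil D y p = 0.
    move=> s hs.
    have e1 : qf L (y + s *: p) = 0 by rewrite qf_comb // -/qp -/b -hs; ring.
    have := qf_comb D y p s hD; rewrite qD (hz _ e1) e1 mulr0 subrr Dp mulr0 addr0.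
    by move=> <-.
  have hqp : qp != 0 by [].
  have k1 := key ((- b + r) / qp).
  have k2 := key ((- b - r) / qp).
  have E1 : ((- b + r) / qp) ^+ 2 * qp + 2%:R * ((- b + r) / qp) * b + qf L y = (r ^+ 2 - disc y) / qp.
    by rewrite /disc /= -/b; field.
  have E2 : ((- b - r) / qp) ^+ 2 * qp + 2%:R * ((- b - r) / qp) * b + qf L y = (r ^+ 2 - disc y) / qp.
    by rewrite /disc /= -/b; field.
  rewrite E1 hr subrr mul0r in k1; rewrite E2 hr subrr mul0r in k2.
  have e3 := k1 erefl; have e4 := k2 erefl.
  have : 2%:R * (2%:R * r / qp) * bil D y p = 0.
    have -> : 2%:R * (2%:R * r / qp) * bil D y p = (qf D y + 2%:R * ((- b + r) / qp) * bil D y p) - (qf D y + 2%:R * ((- b - r) / qp) * bil D y p) by field.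
    by rewrite e3 e4 subrr.
  move/eqP; rewrite !mulf_eq0 invr_eq0 (negPf h2) (negPf rnz) (negPf hqp) /= => /eqP bz.
  by rewrite bz mulr0 addr0 in e3.
have [z hzd] : exists z, disc z != 0.
  apply: NNPP => H; apply: nred.
  exists (qp^-1 *: (p^T *m L)), (p^T *m L) => x.
  have : disc x = 0 by apply/eqP; apply/negPn/negP => hx; apply: H; exists x.
  rewrite /disc /= linZl !lin_bil (bil_sym _ p x hL) => hx.
  have hb : bil L x p ^+ 2 = qf L x * qp by apply/eqP; rewrite -subr_eq0 hx.
  have -> : qf L x = bil L x p ^+ 2 / qp.
    rewrite hb. field. done.
  by rewrite expr2; field.
have claim3 : forall y, qf D y = 0.
  move=> y; apply: NNPP => hy.
  set G : {poly K} := (bil L y p)%:P + (bil L z p)%:P * 'X.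
  set G2 : {poly K} := G ^+ 2 - ((qf L y)%:P + (2%:R * bil L y z)%:P * 'X + (qf L z)%:P * ('X * 'X)) * qp%:P.
  set H : {poly K} := (qf D y)%:P + (2%:R * bil D y z)%:P * 'X + (qf D z)%:P * ('X * 'X).
  have eG : forall s, G2.[s] = disc (y + s *: z).
    move=> s; rewrite /G2 /G /disc /= qf_comb // bilDl bilZl !(hornerD, hornerN, hornerM, hornerC, hornerX). ring.
  have eH : forall s, H.[s] = qf D (y + s *: z).
    move=> s; rewrite /H qf_comb // !(hornerD, hornerN, hornerM, hornerC, hornerX); ring.
  have GH : forall s, (G2 * H).[s] = 0.
    move=> s; rewrite hornerM eG eH.
    case: (eqVneq (disc (y + s *: z)) 0) => [->|nz]; first by rewrite mul0r.
    by rewrite claim1 // mulr0.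
  have nzH : H != 0.
    apply/eqP => h0; apply: hy; have := eH 0; rewrite h0 horner0 scale0r addr0 => e; by rewrite -e.
  have nzG : G2 != 0.
    apply/eqP => h0; move: hzd; rewrite /disc /=.
    have a0 := eG 0; have a1 := eG 1; have a2 := eG (-1).
    rewrite h0 horner0 in a0 a1 a2.
    move: a0 a1 a2; rewrite /disc /= !qf_comb // !bilDl !bilZl => a0 a1 a2.
    have : 2%:R * (bil L z p ^+ 2 - qf L z * qp) = 0.
      have -> : 2%:R * (bil L z p ^+ 2 - qf L z * qp) =
        ((bil L y p + 1 * bil L z p) ^+ 2 - (qf L y + 2%:R * 1 * bil L y z + 1 ^+ 2 * qf L z) * qp)
        + ((bil L y p + -1 * bil L z p) ^+ 2 - (qf L y + 2%:R * -1 * bil L y z + (-1) ^+ 2 * qf L z) * qp)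
        - 2%:R * ((bil L y p + 0 * bil L z p) ^+ 2 - (qf L y + 2%:R * 0 * bil L y z + 0 ^+ 2 * qf L z) * qp).
        by ring.
      by rewrite -a0 -a1 -a2 !horner0; ring.
    by move/eqP; rewrite mulf_eq0 (negPf h2) /= => ->.
  have [s hs] := poly_nonroot _ (mulf_neq0 nzG nzH).
  by rewrite GH eqxx in hs.
exists mu; apply/eqP; rewrite -subr_eq0; apply/eqP.
exact: qf_sym_eq0 hD h2 claim3.
Qed.

Lemma Q_unit (Q : 'M[K]_4) : smooth_quadric Q -> Q \in unitmx.
Proof.
case=> hQ [nz hs]; rewrite -row_free_unit -kermx_eq0; apply/negPn/negP => /rowV0Pn [k kk nzk].
apply: (hs k^T); split; first by apply: contraNneq nzk => h; rewrite -[k]trmxK h trmx0.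
move/sub_kermxP: kk => h.
by rewrite -[Q]hQ -trmx_mul h trmx0.
Qed.

Lemma cone_facts (L : 'M[K]_4) : irreducible_quadric_cone L ->
  Defs.symmetric L /\ \rank L = 3%N /\ exists v : 'cV[K]_4, v != 0 /\ L *m v = 0.
Proof.
case=> hL [nred [v [nzv Lv]]]; split => //.
split; last by exists v.
apply/eqP; rewrite eqn_leq; apply/andP; split.
  have : (v^T <= kermx L)%MS by apply/sub_kermxP; rewrite -[L]hL -trmx_mul Lv trmx0.
  move/mxrankS; rewrite mxrank_ker rank_rV.
  have -> : (v^T != 0) by apply: contraNneq nzv => h; rewrite -[v]trmxK h trmx0.
  move=> h; have := rank_leq_row L; lia.
rewrite ltnNge; apply/negP => h; exact: nred (rank2_reducible _ hL h).
Qed.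

Definition Sm (L Q : 'M[K]_4) := L *m invmx Q *m L.
Definition Nt (L Q : 'M[K]_4) t := L - t *: Q.
Definition Mt (L Q : 'M[K]_4) t := Sm L Q - t *: L.

Lemma Qi_sym (Q : 'M[K]_4) : Defs.symmetric Q -> Defs.symmetric (invmx Q).
Proof. by move=> hQ; rewrite /Defs.symmetric trmx_inv hQ. Qed.

Lemma S_sym (L Q : 'M[K]_4) : Defs.symmetric L -> Defs.symmetric Q -> Defs.symmetric (Sm L Q).
Proof. by move=> hL hQ; rewrite /Defs.symmetric /Sm !trmx_mul hL (Qi_sym _ hQ) mulmxA. Qed.

Lemma N_sym (L Q : 'M[K]_4) t : Defs.symmetric L -> Defs.symmetric Q -> Defs.symmetric (Nt L Q t).
Proof. by move=> hL hQ; rewrite /Defs.symmetric /Nt linearB linearZ /= hL hQ. Qed.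

Lemma M_sym (L Q : 'M[K]_4) t : Defs.symmetric L -> Defs.symmetric Q -> Defs.symmetric (Mt L Q t).
Proof. by move=> hL hQ; rewrite /Defs.symmetric /Mt linearB linearZ /= (S_sym _ _ hL hQ) hL. Qed.

Lemma S_bil (L Q : 'M[K]_4) x y : Defs.symmetric L ->
  bil (invmx Q) (L *m x) (L *m y) = bil (Sm L Q) x y.
Proof. by move=> hL; rewrite /Sm -bil_mul hL. Qed.

Lemma M_f1 (L Q : 'M[K]_4) t : Q \in unitmx -> Mt L Q t = L *m invmx Q *m Nt L Q t.
Proof.
move=> uQ; by rewrite /Mt /Nt /Sm mulmxBr -scalemxAr -[L *m invmx Q *m Q]mulmxA mulVmx // mulmx1.
Qed.

Lemma M_f2 (L Q : 'M[K]_4) t : Q \in unitmx -> Mt L Q t = Nt L Q t *m invmx Q *m L.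
Proof.
move=> uQ; by rewrite /Mt /Nt /Sm !mulmxBl -!scalemxAl mulmxV // mul1mx.
Qed.

Lemma rank_lower (L Q : 'M[K]_4) t : \rank L = 3%N -> Q \in unitmx ->
  (\rank (Nt L Q t) <= \rank (Mt L Q t) + 1)%N.
Proof.
move=> rL uQ; rewrite (M_f2 _ _ t uQ) -mulmxA.
have h1 := mxrank_mul_min (Nt L Q t) (invmx Q *m L).
have h2 : (\rank L <= \rank (invmx Q *m L))%N.
  by rewrite -{1}[L]mul1mx -(mulmxV uQ) -mulmxA mxrankM_maxr.
move: h1 h2; rewrite rL.
set a := \rank (Nt L Q t); set b := \rank _; set c := \rank _. lia.
Qed.

Lemma rank_KER (L Q : 'M[K]_4) (v : 'cV[K]_4) t : Defs.symmetric L -> Q \in unitmx ->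
  v != 0 -> L *m v = 0 -> t != 0 -> (\rank (Mt L Q t) < \rank (Nt L Q t))%N.
Proof.
move=> hL uQ nzv Lv nzt.
set A := kermx (Nt L Q t).
have vL : v^T *m L = 0 by rewrite -[L]hL -trmx_mul Lv trmx0.
have s1 : (A <= kermx (Mt L Q t))%MS.
  by apply/sub_kermxP; rewrite (M_f2 _ _ t uQ) !mulmxA mulmx_ker !mul0mx.
have s2 : (v^T <= kermx (Mt L Q t))%MS.
  by apply/sub_kermxP; rewrite (M_f1 _ _ t uQ) !mulmxA vL !mul0mx.
have ns : ~~ (v^T <= A)%MS.
  apply/negP => /sub_kermxP; rewrite /Nt mulmxBr vL sub0r -scalemxAr => /eqP.
  rewrite oppr_eq0 scaler_eq0 (negPf nzt) /= mulmx_free_eq0 ?row_free_unit //.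
  by apply/negP; apply: contraNneq nzv => h; rewrite -[v]trmxK h trmx0.
have lt : (A < A + v^T)%MS.
  by rewrite ltmxE addsmxSl /= addsmx_sub submx_refl /=.
have r1 := rank_ltmx lt.
have r2 : (\rank (A + v^T)%MS <= \rank (kermx (Mt L Q t)))%N.
  by apply: mxrankS; rewrite addsmx_sub s1 s2.
move: r1 r2; rewrite /A !mxrank_ker.
have := rank_leq_row (Mt L Q t); have := rank_leq_row (Nt L Q t).
set a := \rank (Mt L Q t); set b := \rank (Nt L Q t); set c := \rank _. lia.
Qed.

Lemma contained_qf (L Q : 'M[K]_4) : Defs.symmetric L -> lambda_hat_sub_Q_hat L Q ->
  forall x, qf L x = 0 -> qf (Sm L Q) x = 0.
Proof.
move=> hL hc x qx; rewrite /qf -S_bil //.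
case: (eqVneq (L *m x) 0) => [->|nz]; first by rewrite bil0l.
by case: (hc (L *m x) (conj nz (ex_intro _ x (conj qx erefl)))).
Qed.

Lemma member_sym (L Q M : 'M[K]_4) : Defs.symmetric L -> Defs.symmetric Q ->
  pencil_member L Q M -> Defs.symmetric M.
Proof.
move=> hL hQ [a [b [_ ->]]]; by rewrite /Defs.symmetric linearD !linearZ /= hL hQ.
Qed.

Lemma member_scale (L Q M : 'M[K]_4) : Q \in unitmx -> pencil_member L Q M ->
  (\rank M <= 3)%N -> exists a t, a != 0 /\ M = a *: Nt L Q t.
Proof.
move=> uQ [a [b [ab ->]]] rM; case: (eqVneq a 0) => [a0|nza].
  move: ab rM; rewrite a0 scale0r add0r; case=> [/eqP //|nzb].
  by rewrite mxrank_scale_nz // mxrank_unit.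
exists a, (- b / a); split => //.
have e : a * (- b / a) = - b by field.
by rewrite /Nt scalerBr scalerA e scaleNr opprK.
Qed.

Lemma P2core (L Q : 'M[K]_4) : irreducible_quadric_cone L -> smooth_quadric Q -> (2%:R : K) != 0 ->
  lambda_hat_sub_Q_hat L Q -> exists mu, (\rank (Nt L Q mu) <= 1)%N.
Proof.
move=> hc hs h2 hin.
have [hL [rL _]] := cone_facts _ hc.
have uQ := Q_unit _ hs.
have hQ : Defs.symmetric Q by case: hs.
have [mu emu] := ns_lemma _ _ hL (S_sym _ _ hL hQ) h2 (proj1 (proj2 hc)) (contained_qf _ _ hL hin).
exists mu; have := rank_lower _ _ mu rL uQ.
by rewrite /Mt emu subrr mxrank0.
Qed.

Lemma P2_back (L Q : 'M[K]_4) : irreducible_quadric_cone L -> smooth_quadric Q -> (2%:R : K) != 0 ->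
  lambda_hat_sub_Q_hat L Q -> exists M, pencil_member L Q M /\ nonreduced M.
Proof.
move=> hc hs h2 hin; have [mu rN] := P2core _ _ hc hs h2 hin.
have [hL _] := cone_facts _ hc; have hQ : Defs.symmetric Q by case: hs.
exists (Nt L Q mu); split; last exact: rank1_nonreduced _ (N_sym _ _ mu hL hQ) rN.
exists 1, (- mu); split; first by left; exact: oner_neq0.
by rewrite scale1r scaleNr.
Qed.

Lemma P2_fwd (L Q : 'M[K]_4) : irreducible_quadric_cone L -> smooth_quadric Q -> (2%:R : K) != 0 ->
  (exists M, pencil_member L Q M /\ nonreduced M) -> lambda_hat_sub_Q_hat L Q.
Proof.
move=> hc hs h2 [M [hm hnr]].
have [hL [rL [v [nzv Lv]]]] := cone_facts _ hc.
have uQ := Q_unit _ hs; have hQ : Defs.symmetric Q by case: hs.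
have hM := member_sym _ _ _ hL hQ hm.
have rM := nonreduced_rank _ hM h2 hnr.
have [a [t [nza eM]]] := member_scale _ _ _ uQ hm (leq_trans rM (isT : (1 <= 3)%N)).
have rN : (\rank (Nt L Q t) <= 1)%N by rewrite -(mxrank_scale_nz _ nza) -eM.
have nzt : t != 0.
  by apply: contraTneq rN => ->; rewrite /Nt scale0r subr0 rL.
have := rank_KER _ _ _ t hL uQ nzv Lv nzt => lt.
have : \rank (Mt L Q t) = 0%N by move: lt rN; set a1 := \rank _; set b1 := \rank _; lia.
move/eqP; rewrite mxrank_eq0 /Mt subr_eq0 => /eqP eS.
move=> u [nzu [x [qx ex]]]; subst u; split; first exact: nzu.
by rewrite /dual_quadric /qf S_bil // eS bilAZ -/(qf L x) qx mulr0.
Qed.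

Lemma bil_M (L Q : 'M[K]_4) t x y : bil (Sm L Q) x y = bil (Mt L Q t) x y + t * bil L x y.
Proof. by rewrite /Mt bilAB bilAZ subrK. Qed.

Lemma P1_fwd (L Q : 'M[K]_4) : irreducible_quadric_cone L -> smooth_quadric Q -> (2%:R : K) != 0 ->
  (exists M, pencil_member L Q M /\ reducible M /\ ~ nonreduced M) -> bitangent L Q.
Proof.
move=> hc hs h2 [M [hm [hred hnr]]].
have [hL [rL [v [nzv Lv]]]] := cone_facts _ hc.
have uQ := Q_unit _ hs; have hQ : Defs.symmetric Q by case: hs.
have hM := member_sym _ _ _ hL hQ hm.
have rM := reducible_rank _ hM h2 hred.
have [a [t [nza eM]]] := member_scale _ _ _ uQ hm (leq_trans rM (isT : (2 <= 3)%N)).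
have rNt : \rank (Nt L Q t) = \rank M by rewrite eM mxrank_scale_nz.
have rN2 : (2 <= \rank (Nt L Q t))%N.
  rewrite ltnNge; apply/negP => h; apply: hnr.
  by apply: (rank1_nonreduced _ hM); rewrite -rNt.
have nzt : t != 0.
  by apply/eqP => t0; move: rM; rewrite -rNt t0 /Nt scale0r subr0 rL.
have lt := rank_KER _ _ _ t hL uQ nzv Lv nzt.
have rMt : (\rank (Mt L Q t) <= 1)%N by move: lt rM; rewrite -rNt; set a1 := \rank _; set b1 := \rank _; lia.
have [k [wr ek]] := rank1_sym _ (M_sym _ _ t hL hQ) rMt.
split.
  move=> hin; have [mu rmu] := P2core _ _ hc hs h2 hin.
  case: (eqVneq mu t) => [emu|nmu].
    by move: rmu rN2; rewrite emu; set a1 := \rank _; lia.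
  have e : Nt L Q t - Nt L Q mu = (mu - t) *: Q.
    by rewrite /Nt scalerBl opprB addrC addrA subrK addrC.
  have := mxrank_add (Nt L Q t) (- Nt L Q mu).
  rewrite mxrank_opp e mxrank_scale_nz ?subr_eq0 // mxrank_unit //.
  move: rmu rM; rewrite -rNt; set a1 := \rank _; set b1 := \rank _; lia.
move=> u [nzu [x [qx ex]]] [_ qu] w [y [ly ew]]; subst u w.
rewrite /on_tangent_plane /dual_quadric S_bil //.
rewrite /dual_quadric /qf S_bil // in qu.
rewrite lin_tr // in ly.
have qM : bil (Mt L Q t) x x = 0.
  by have := bil_M L Q t x x; rewrite qu -/(qf L x) qx mulr0 addr0 => <-.
rewrite ek bilAZ bil_outer in qM.
have kx : k * lin wr x = 0.
  by move/eqP: qM; rewrite mulrA mulf_eq0 => /orP [/eqP //|/eqP ->]; rewrite mulr0.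
by rewrite (bil_M _ _ t) ly mulr0 addr0 ek bilAZ bil_outer mulrA kx mul0r.
Qed.

Lemma exists_one (r : 'rV[K]_4) : r != 0 -> exists y, lin r y = 1.
Proof.
move=> /rV_nz [k hk]; exists ((r 0 k)^-1 *: delta_mx k 0).
by rewrite linZr lin_delta mulVf.
Qed.

Lemma lin_prop (r1 r2 : 'rV[K]_4) : r1 != 0 -> (forall y, lin r1 y = 0 -> lin r2 y = 0) ->
  exists nu, forall y, lin r2 y = nu * lin r1 y.
Proof.
move=> nz h; have [y0 hy0] := exists_one _ nz.
exists (lin r2 y0) => y.
have := h (y + (- lin r1 y) *: y0).
rewrite linDr linZr hy0 mulr1 subrr => /(_ erefl).
rewrite linDr linZr => e.
by rewrite -[lin r2 y]subr0 -e; ring.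
Qed.

Lemma xTL_nz (L : 'M[K]_4) (x : 'cV[K]_4) : Defs.symmetric L -> L *m x != 0 -> x^T *m L != 0.
Proof.
move=> hL; apply: contraNneq => h.
by rewrite -[L]hL -[x]trmxK -trmx_mul h trmx0.
Qed.

Lemma qf_lin2 (A : 'M[K]_4) (a b : K) x y : Defs.symmetric A ->
  qf A (a *: x + b *: y) = a ^+ 2 * qf A x + 2%:R * a * b * bil A x y + b ^+ 2 * qf A y.
Proof.
move=> hA; rewrite /qf bilDl !bilDr !bilZl !bilZr (bil_sym _ y x hA); ring.
Qed.

Lemma tangent_dir (L : 'M[K]_4) (x : 'cV[K]_4) : Defs.symmetric L -> ~ reducible L -> L *m x != 0 ->
  exists y0 u, bil L x y0 = 1 /\ bil L x u = 0 /\ qf L u != 0.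
Proof.
move=> hL nred nz.
have [y0 hy0] := exists_one _ (xTL_nz _ _ hL nz).
rewrite lin_bil in hy0.
exists y0; apply: NNPP => H; apply: nred.
exists (x^T *m L), (2%:R *: (y0^T *m L) - qf L y0 *: (x^T *m L)) => z.
set al := bil L x z.
have hu : qf L (z - al *: y0) = 0.
  apply: NNPP => hq; apply: H; exists (z - al *: y0); split; first exact: hy0.
  split; last by apply/eqP.
  by rewrite bilBr bilZr hy0 mulr1 /al subrr.
have ez : z = (z - al *: y0) + al *: y0 by rewrite subrK.
rewrite {1}ez qf_comb // hu bilBl bilZl.
rewrite !lin_bil linDl -scaleN1r !linZl !lin_bil -/al.
rewrite (bil_sym _ z y0 hL) -/(qf L y0) /al; ring.
Qed.

Lemma bil_Lnz (L : 'M[K]_4) (x z : 'cV[K]_4) : bil L x z != 0 -> L *m z != 0.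
Proof. by apply: contraNneq => h; rewrite bil_ker. Qed.

Lemma common_point (L Q : 'M[K]_4) (x0 : 'cV[K]_4) : (2%:R : K) != 0 -> Defs.symmetric L -> Defs.symmetric Q -> ~ reducible L ->
  qf L x0 = 0 -> L *m x0 != 0 -> qf (Sm L Q) x0 != 0 ->
  exists x1, [/\ qf L x1 = 0, qf (Sm L Q) x1 = 0 & L *m x1 != 0].
Proof.
move=> h2 hL hQ nred q0 nz0 s0.
have hS := S_sym _ _ hL hQ.
have [y0 [u [hy0 [hu qu]]]] := tangent_dir _ _ hL nred nz0.
set S := Sm L Q.
set R0 := qf L y0; set R1 := bil L y0 u; set R2 := qf L u.
set P0 := qf S y0; set P1 := bil S y0 u; set P2 := qf S u.
set B0 := bil S y0 x0; set B1 := bil S u x0; set c := qf S x0.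
have [s hs] := root4 (4%:R * P0 - 4%:R * R0 * B0 + c * R0 ^+ 2)
  (8%:R * P1 - 4%:R * R0 * B1 - 8%:R * R1 * B0 + 4%:R * c * R0 * R1)
  (4%:R * P2 - 8%:R * R1 * B1 - 4%:R * R2 * B0 + c * (4%:R * R1 ^+ 2 + 2%:R * R0 * R2))
  (- 4%:R * R2 * B1 + 4%:R * c * R1 * R2) (c * R2 ^+ 2) (mulf_neq0 s0 (expf_neq0 _ qu)).
set y := y0 + s *: u.
have Ry : qf L y = R0 + 2%:R * s * R1 + s ^+ 2 * R2 by rewrite /y qf_comb.
have Py : qf S y = P0 + 2%:R * s * P1 + s ^+ 2 * P2 by rewrite /y qf_comb.
have By : bil S y x0 = B0 + s * B1 by rewrite /y bilDl bilZl.
have bL : bil L y x0 = 1 by rewrite /y bilDl bilZl (bil_sym _ y0 x0 hL) (bil_sym _ u x0 hL) hy0 hu mulr0 addr0.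
exists (2%:R *: y + (- qf L y) *: x0); split.
- by rewrite qf_lin2 // bL q0; ring.
- rewrite qf_lin2 // Py By Ry -/c -hs /R0 /R1 /R2 /P0 /P1 /P2 /B0 /B1 /c; ring.
- apply: (@bil_Lnz _ x0); rewrite bilDr !bilZr (bil_sym _ x0 y hL) bL -/(qf L x0) q0 mulr0 addr0 mulr1.
  exact: h2.
Qed.

Lemma rowmul_eq (A : 'M[K]_4) (x y : 'cV[K]_4) : x^T *m (A *m y) = (bil A x y)%:M.
Proof. by rewrite mulmxA [LHS]mx11_scalar. Qed.

Lemma rowmul_nz (A : 'M[K]_4) (x y : 'cV[K]_4) : bil A x y != 0 -> x^T *m (A *m y) != 0.
Proof.
move=> h; apply/eqP => e; move/eqP: h; apply.
by have := congr1 (fun M : 'M[K]_1 => M 0 0) e; rewrite rowmul_eq !mxE eqxx mulr1n.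
Qed.

Lemma rowmul_0 (A : 'M[K]_4) (x y : 'cV[K]_4) : bil A x y = 0 -> x^T *m (A *m y) = 0.
Proof. by move=> h; rewrite rowmul_eq h raddf0. Qed.

Lemma STEP m (B : 'M[K]_(m, 4)) (A : 'rV[K]_4) (f : 'cV[K]_4) :
  B *m f = 0 -> A *m f != 0 -> (\rank B < \rank (B + A)%MS)%N.
Proof.
move=> hB hA; apply: rank_ltmx; rewrite ltmxE addsmxSl /=.
apply/negP => sub.
have : (A <= kermx f)%MS.
  apply: submx_trans (addsmxSr B A) _; apply: submx_trans sub _.
  by apply/sub_kermxP.
by move/sub_kermxP => e; rewrite e eqxx in hA.
Qed.

Lemma adds0 m1 m2 (B : 'M[K]_(m1, 4)) (A : 'M[K]_(m2, 4)) (f : 'cV[K]_4) :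
  B *m f = 0 -> A *m f = 0 -> (B + A)%MS *m f = 0.
Proof.
move=> hB hA; apply/sub_kermxP; rewrite addsmx_sub.
by apply/andP; split; apply/sub_kermxP.
Qed.

Lemma radical_row (A : 'M[K]_4) (x : 'cV[K]_4) : (forall y, bil A x y = 0) -> x^T *m A = 0.
Proof.
move=> h; apply/matrixP => i j; rewrite [RHS]mxE ord1 -(h (delta_mx j 0)).
by rewrite /bil -colE [RHS]mxE.
Qed.

Lemma TAN (L Q : 'M[K]_4) (x : 'cV[K]_4) : bitangent L Q -> Defs.symmetric L ->
  qf L x = 0 -> L *m x != 0 -> qf (Sm L Q) x = 0 ->
  exists nu, forall y, bil (Sm L Q) x y = nu * bil L x y.
Proof.
move=> [_ ht] hL qx nz sx.
have tg := ht (L *m x) (conj nz (ex_intro _ x (conj qx erefl))).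
have tg2 : tangent_at L Q (L *m x).
  apply: tg; split; first exact: nz.
  by rewrite /dual_quadric /qf S_bil.
have hp : forall y, lin (x^T *m L) y = 0 -> lin (x^T *m Sm L Q) y = 0.
  move=> y; rewrite !lin_bil => hy.
  have hw : on_tangent_line_lambda_hat L (L *m x) (L *m y) by exists y; split => //; rewrite lin_tr.
  by have := tg2 _ hw; rewrite /on_tangent_plane /dual_quadric S_bil.
have [nu hnu] := lin_prop _ _ (xTL_nz _ _ hL nz) hp.
by exists nu => y; rewrite -!lin_bil hnu.
Qed.

Lemma P1_back (L Q : 'M[K]_4) : irreducible_quadric_cone L -> smooth_quadric Q -> (2%:R : K) != 0 ->
  bitangent L Q -> exists M, pencil_member L Q M /\ reducible M /\ ~ nonreduced M.
Proof.
move=> hc hs h2 hbt.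
have [hL [rL [v [nzv Lv]]]] := cone_facts _ hc.
have nred : ~ reducible L by case: hc => _ [].
have uQ := Q_unit _ hs; have hQ : Defs.symmetric Q by case: hs.
have hS := S_sym _ _ hL hQ.
have nc := proj1 hbt.
have [x0 [q0 [nz0 s0]]] : exists x0, [/\ qf L x0 = 0, L *m x0 != 0 & qf (Sm L Q) x0 != 0].
  apply: NNPP => H; apply: nc => u [nzu [x [qx ex]]]; subst u; split; first exact: nzu.
  rewrite /dual_quadric /qf S_bil //; apply: NNPP => hh; apply: H; exists x; split => //.
  by apply/eqP.
have [x1 [q1 s1 nz1]] := common_point _ _ _ h2 hL hQ nred q0 nz0 s0.
have [nu hnu] := TAN _ _ _ hbt hL q1 nz1 s1.
set M := Mt L Q nu.
have hM : Defs.symmetric M := M_sym _ _ nu hL hQ.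
have bM : forall x y, bil M x y = bil (Sm L Q) x y - nu * bil L x y.
  by move=> x y; rewrite (bil_M _ _ nu) addrK.
have rad1 : forall y, bil M x1 y = 0 by move=> y; rewrite bM hnu subrr.
have Mv : M *m v = 0 by rewrite /M (M_f2 _ _ nu uQ) -mulmxA Lv mulmx0.
have radv : forall y, bil M v y = 0 by move=> y; rewrite (bil_sym _ v y hM) bil_ker.
have vf : forall y : 'cV[K]_4, v^T *m (L *m y) = 0.
  by move=> y; apply: (rowmul_0 L v y); rewrite (bil_sym _ v y hL) bil_ker.
have [y0 [u [hy0 [hu qu]]]] := tangent_dir _ _ hL nred nz1.
have [w3 [f3 [radw3 f3v f3x1 f3w3]]] : exists (w3 f3 : 'cV[K]_4), [/\ (forall y, bil M w3 y = 0),
   v^T *m f3 = 0, x1^T *m f3 = 0 & w3^T *m f3 != 0].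
  set m0 := qf M y0; set m1 := bil M y0 u; set m2 := qf M u.
  have hy : (exists y, qf M y = 0 /\ bil L x1 y = 1) \/ (m1 = 0 /\ m2 = 0).
    case: (eqVneq m2 0) => [m20|m2nz].
      case: (eqVneq m1 0) => [m10|m1nz].
        case: (eqVneq m0 0) => [m00|_]; last by right.
        by left; exists y0.
      left; exists (y0 + (- m0 / (2%:R * m1)) *: u); split.
        rewrite qf_comb // -/m0 -/m1 -/m2 m20; field; by rewrite m1nz h2.
      by rewrite bilDr bilZr hy0 hu mulr0 addr0.
    have [s hsr] := root2 m0 (2%:R * m1) m2 m2nz.
    left; exists (y0 + s *: u); split.
      by rewrite qf_comb // -/m0 -/m1 -/m2 -hsr; ring.
    by rewrite bilDr bilZr hy0 hu mulr0 addr0.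
  case: hy => [[y [qMy by1]] | [m10 m20]].
    exists y, (L *m x1); split.
    - set z := 2%:R *: y + (- qf L y) *: x1.
      have byx : bil L y x1 = 1 by rewrite (bil_sym _ y x1 hL).
      have qz : qf L z = 0 by rewrite /z qf_lin2 // byx q1; ring.
      have bz : bil L x1 z = 2%:R by rewrite /z bilDr !bilZr by1 -/(qf L x1) q1; ring.
      have nzz : L *m z != 0 by apply: (@bil_Lnz _ x1); rewrite bz.
      have sz : qf (Sm L Q) z = 0.
        have h : qf M z = 0.
          rewrite /z qf_lin2 // qMy (bil_sym _ y x1 hM) rad1.
          by rewrite /qf rad1; ring.
        have := bM z z; rewrite /qf in h qz; rewrite h qz mulr0 subr0 => e.
        by rewrite /qf -e.
      have [nu' hnu'] := TAN _ _ _ hbt hL qz nzz sz.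
      have enu : nu' = nu.
        have e1 := hnu' x1.
        have e2 := bM z x1.
        rewrite (bil_sym _ z x1 hM) rad1 e1 (bil_sym _ z x1 hL) bz in e2.
        have : (nu' - nu) * 2%:R = 0 by rewrite mulrBl -e2.
        by move/eqP; rewrite mulf_eq0 (negPf h2) orbF subr_eq0 => /eqP.
      have radz : forall y', bil M z y' = 0 by move=> y'; rewrite bM hnu' enu subrr.
      move=> y'; have := radz y'; rewrite /z bilDl !bilZl rad1 mulr0 addr0 => /eqP.
      by rewrite mulf_eq0 (negPf h2) /= => /eqP.
    - exact: vf x1.
    - by apply: rowmul_0.
    - by apply: rowmul_nz; rewrite (bil_sym _ y x1 hL) by1 oner_neq0.
  have b1 : bil L x1 y0 != 0 by rewrite hy0 oner_neq0.
  have Mu : M *m u = 0.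
    have c1 : v^T *m (M *m u) = 0 by apply: rowmul_0; apply: radv.
    have c2 : x1^T *m (M *m u) = 0 by apply: rowmul_0; apply: rad1.
    have c3 : u^T *m (M *m u) = 0 by apply: rowmul_0; exact: m20.
    have c4 : y0^T *m (M *m u) = 0 by apply: rowmul_0; exact: m10.
    have sC : (((v^T + x1^T) + u^T) + y0^T <= kermx (M *m u))%MS.
      by rewrite !addsmx_sub !sub_kermx c1 c2 c3 c4 eqxx.
    have s2 := STEP _ _ _ _ (vf y0) (rowmul_nz _ _ _ b1).
    have s3 := STEP _ _ _ _ (adds0 _ _ _ _ _ (vf u) (rowmul_0 _ _ _ hu)) (rowmul_nz _ _ _ qu).
    have bux : bil L u x1 = 0 by rewrite (bil_sym _ u x1 hL).
    have byx : bil L y0 x1 != 0 by rewrite (bil_sym _ y0 x1 hL) hy0 oner_neq0.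
    have s4 := STEP _ _ _ _ (adds0 _ _ _ _ _ (adds0 _ _ _ _ _ (vf x1) (rowmul_0 _ _ _ q1)) (rowmul_0 _ _ _ bux)) (rowmul_nz _ _ _ byx).
    have nzvT : v^T != 0 by apply: contraNneq nzv => h; rewrite -[v]trmxK h trmx0.
    have r1 : \rank v^T = 1%N by rewrite rank_rV nzvT.
    have := mxrankS sC; rewrite mxrank_ker.
    move: s2 s3 s4 r1; set a1 := \rank v^T; set a2 := \rank (v^T + x1^T)%MS;
      set a3 := \rank (_ + u^T)%MS; set a4 := \rank (_ + y0^T)%MS => s2 s3 s4 r1 h.
    have : \rank (M *m u) = 0%N by move: h; rewrite -/a4; lia.
    by move/eqP; rewrite mxrank_eq0 => /eqP.
  exists u, (L *m u); split.
  - by move=> y'; rewrite (bil_sym _ u y' hM) bil_ker.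
  - exact: vf u.
  - by apply: rowmul_0.
  - exact: rowmul_nz.
have nzvT : v^T != 0 by apply: contraNneq nzv => h; rewrite -[v]trmxK h trmx0.
have r1 : \rank v^T = 1%N by rewrite rank_rV nzvT.
have b1 : bil L x1 y0 != 0 by rewrite hy0 oner_neq0.
have r2 := STEP _ _ _ _ (vf y0) (rowmul_nz _ _ _ b1).
have r3 := STEP _ _ _ _ (adds0 _ _ _ _ _ f3v f3x1) f3w3.
have sub : ((v^T + x1^T) + w3^T <= kermx M)%MS.
  have k1 : (v^T <= kermx M)%MS by apply/sub_kermxP; apply: radical_row.
  have k2 : (x1^T <= kermx M)%MS by apply/sub_kermxP; apply: radical_row.
  have k3 : (w3^T <= kermx M)%MS by apply/sub_kermxP; apply: radical_row.
  by rewrite !addsmx_sub k1 k2 k3.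
have rM : (\rank M <= 1)%N.
  have := mxrankS sub; rewrite mxrank_ker.
  move: r1 r2 r3; have := rank_leq_row M.
  set a1 := \rank M; set a2 := \rank v^T; set a3 := \rank (v^T + x1^T)%MS; set a4 := \rank _. lia.
have rN : (\rank (Nt L Q nu) <= 2)%N by have := rank_lower _ _ nu rL uQ; rewrite -/M; lia.
have hN := N_sym _ _ nu hL hQ.
exists (Nt L Q nu); split.
  exists 1, (- nu); split; first by left; exact: oner_neq0.
  by rewrite scale1r scaleNr.
split; first exact: rank2_reducible hN rN.
move=> hnr; apply: nc; apply: P2_fwd hc hs h2 _.
exists (Nt L Q nu); split => //.
exists 1, (- nu); split; first by left; exact: oner_neq0.
by rewrite scale1r scaleNr.
Qed.
End C.

Theorem lemma6p5 (K : closedFieldType) (hK : (2%:R : K) != 0)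
  (L Q : 'M[K]_4) (hL : irreducible_quadric_cone L) (hQ : smooth_quadric Q) :
  ((exists M, pencil_member L Q M /\ reducible M /\ ~ nonreduced M)
     <-> bitangent L Q) /\
  ((exists M, pencil_member L Q M /\ nonreduced M)
     <-> lambda_hat_sub_Q_hat L Q).
Proof.
split; split.
- exact: P1_fwd hL hQ hK.
- exact: P1_back hL hQ hK.
- exact: P2_fwd hL hQ hK.
- exact: P2_back hL hQ hK.
Qed.
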